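(* In the simplified FaRMv2 protocol described in the context, let $T$ be a transaction with read timestamp $rts$, and let $R$ be an object in $T$'s read set which $T$ reads at version $v_R \le rts$. Then in this execution the object $R$ is never updated at a version (timestamp) lying in the interval $(v_R, rts)$.
   Context: Global time means the time at a distinguished clock master. Each machine has a local clock whose rate differs from that of global time by a relative factor of at most a known drift bound $\epsilon$. The function TIME() returns an interval $[L,U]$ such that the global time at the moment of the call lies in $[L,U]$. The function GET\_TS is: $[L,U] \gets \mathrm{TIME}()$; sleep for $(U-L)(1+\epsilon)$ units of local time; return $U$. The data consists of objects, each having a lock bit and a set of versions, each version tagged with a timestamp (the write timestamp of the transaction that wrote it). ReadAtTs$(R,ts)$: if $R$ is locked return NULL; otherwise return the version of $R$ with the highest timestamp $\le ts$, or NULL if none is available. LockAtTs$(R,ts)$: if $R$ is locked or $R$ has timestamp $\ge ts$ return NULL; otherwise lock $R$. A transaction with read set RSet and write set WSet executes ExecuteAndCommit(RSet, WSet): $rts \gets$ GET\_TS; for each $R\in$ RSet, if ReadAtTs$(R,rts)$ returns NULL then abort; if WSet is empty, commit (read-only transaction); otherwise for each $W\in$ WSet, if LockAtTs$(W,rts)$ returns NULL then abort; then $wts \gets$ GET\_TS (performed while holding the locks); then for each $R \in$ RSet $\setminus$ WSet, if $R$ is locked or $R$ has timestamp $> rts$, abort (validation failure); then install for each object in WSet a new version with timestamp $wts$, unlock all objects, and commit. Here $rts$ is the transaction's read timestamp and $wts$ its write timestamp; a version of an object written by a committed transaction carries that transaction's $wts$. *)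

(* Defs.v *)
From Stdlib Require Import Reals List.
Open Scope R_scope.

(* Operational model of the simplified FaRMv2 protocol.
   - Global time [gtime] and one local clock per machine.
   - Each object has a lock bit and a list of version timestamps.
   - Each transaction T runs ExecuteAndCommit(rset T, wset T) on machine
     [mach T]; its control state is a [phase].
   - Steps are atomic and arbitrarily interleaved; time advances between
     steps, with every local clock drifting by a relative factor <= eps. *)

Inductive phase (Obj : Type) : Type :=
| PStart
| PRtsSleep (L U c0 : R)                        (* in GET_TS for rts: TIME() gave [L,U]; local clock was c0 *)
| PRead (rts : R) (todo : list Obj)
| PLock (rts : R) (todo held : list Obj)
| PWtsSleep (rts : R) (held : list Obj) (L U c0 : R) (* in GET_TS for wts, holding locks *)
| PValidate (rts wts : R) (todo held : list Obj)(* validating RSet \ WSet *)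
| PInstall (wts : R) (todo : list Obj)
| PCommitted
| PAborted.
Arguments PStart {Obj}.
Arguments PRtsSleep {Obj}.
Arguments PRead {Obj}.
Arguments PLock {Obj}.
Arguments PWtsSleep {Obj}.
Arguments PValidate {Obj}.
Arguments PInstall {Obj}.
Arguments PCommitted {Obj}.
Arguments PAborted {Obj}.

Record state (Obj Txn Mach : Type) := mkState {
  gtime : R;
  clk : Mach -> R;
  locked : Obj -> bool;
  versions : Obj -> list R;
  phase_of : Txn -> phase Obj
}.
Arguments gtime {Obj Txn Mach}.
Arguments clk {Obj Txn Mach}.
Arguments locked {Obj Txn Mach}.
Arguments versions {Obj Txn Mach}.
Arguments phase_of {Obj Txn Mach}.

(* Observable events. [LRead T O v rts]: transaction T with read timestamp
   rts executed ReadAtTs(O, rts) and obtained the version with timestamp v.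
   [LInstall T O w]: T installed a new version of O with timestamp w. *)
Inductive label (Obj Txn : Type) : Type :=
| LTime
| LInternal (T : Txn)
| LRead (T : Txn) (O : Obj) (v rts : R)
| LInstall (T : Txn) (O : Obj) (w : R).
Arguments LTime {Obj Txn}.
Arguments LInternal {Obj Txn}.
Arguments LRead {Obj Txn}.
Arguments LInstall {Obj Txn}.

Section Protocol.
Variables (Obj Txn Mach : Type).
Variable eps : R.
Variable mach : Txn -> Mach.
Variables rset wset : Txn -> list Obj.

Notation st := (state Obj Txn Mach).

Definition frame_time (s s' : st) : Prop :=
  gtime s' = gtime s /\ clk s' = clk s.

Definition objs_same (s s' : st) : Prop :=
  locked s' = locked s /\ versions s' = versions s.

Definition set_phase (s s' : st) (T : Txn) (p : phase Obj) : Prop :=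
  phase_of s' T = p /\ forall T', T' <> T -> phase_of s' T' = phase_of s T'.

Definition release (s s' : st) (held : list Obj) : Prop :=
  versions s' = versions s /\
  forall O, (In O held -> locked s' O = false) /\
            (~ In O held -> locked s' O = locked s O).

Definition lock_one (s s' : st) (O : Obj) : Prop :=
  versions s' = versions s /\ locked s' O = true /\
  forall O', O' <> O -> locked s' O' = locked s O'.

Definition install_one (s s' : st) (O : Obj) (w : R) : Prop :=
  versions s' O = w :: versions s O /\
  (forall O', O' <> O -> versions s' O' = versions s O') /\
  locked s' O = false /\
  (forall O', O' <> O -> locked s' O' = locked s O').

(* GET_TS: after TIME() returned [L,U] at local time c0, the sleep of
   (U-L)(1+eps) local time units is over. *)
Definition sleep_done (s : st) (T : Txn) (L U c0 : R) : Prop :=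
  clk s (mach T) >= c0 + (U - L) * (1 + eps).

Inductive step : st -> label Obj Txn -> st -> Prop :=
| s_time s s' (d : R) :
    0 <= d -> gtime s' = gtime s + d ->
    (forall m, (1 - eps) * d <= clk s' m - clk s m <= (1 + eps) * d) ->
    objs_same s s' -> phase_of s' = phase_of s ->
    step s LTime s'
| s_start s s' T L U :
    phase_of s T = PStart -> L <= gtime s <= U ->
    set_phase s s' T (PRtsSleep L U (clk s (mach T))) ->
    objs_same s s' -> frame_time s s' -> step s (LInternal T) s'
| s_rts_wake s s' T L U c0 :
    phase_of s T = PRtsSleep L U c0 -> sleep_done s T L U c0 ->
    set_phase s s' T (PRead U (rset T)) ->
    objs_same s s' -> frame_time s s' -> step s (LInternal T) s'
| s_read_ok s s' T rts O todo v :
    phase_of s T = PRead rts (O :: todo) ->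
    locked s O = false -> In v (versions s O) -> v <= rts ->
    (forall v', In v' (versions s O) -> v' <= rts -> v' <= v) ->
    set_phase s s' T (PRead rts todo) ->
    objs_same s s' -> frame_time s s' -> step s (LRead T O v rts) s'
| s_read_abort s s' T rts O todo :
    phase_of s T = PRead rts (O :: todo) ->
    (locked s O = true \/ forall v', In v' (versions s O) -> rts < v') ->
    set_phase s s' T PAborted ->
    objs_same s s' -> frame_time s s' -> step s (LInternal T) s'
| s_read_done_ro s s' T rts :
    phase_of s T = PRead rts nil -> wset T = nil ->
    set_phase s s' T PCommitted ->
    objs_same s s' -> frame_time s s' -> step s (LInternal T) s'
| s_read_done_rw s s' T rts :
    phase_of s T = PRead rts nil -> wset T <> nil ->
    set_phase s s' T (PLock rts (wset T) nil) ->
    objs_same s s' -> frame_time s s' -> step s (LInternal T) s'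
| s_lock_ok s s' T rts O todo held :
    phase_of s T = PLock rts (O :: todo) held ->
    locked s O = false -> (forall v, In v (versions s O) -> v < rts) ->
    lock_one s s' O ->
    set_phase s s' T (PLock rts todo (O :: held)) ->
    frame_time s s' -> step s (LInternal T) s'
| s_lock_abort s s' T rts O todo held :
    phase_of s T = PLock rts (O :: todo) held ->
    (locked s O = true \/ exists v, In v (versions s O) /\ rts <= v) ->
    release s s' held -> set_phase s s' T PAborted ->
    frame_time s s' -> step s (LInternal T) s'
| s_wts_start s s' T rts held L U :
    phase_of s T = PLock rts nil held -> L <= gtime s <= U ->
    set_phase s s' T (PWtsSleep rts held L U (clk s (mach T))) ->
    objs_same s s' -> frame_time s s' -> step s (LInternal T) s'
| s_wts_wake s s' T rts held L U c0 :
    phase_of s T = PWtsSleep rts held L U c0 -> sleep_done s T L U c0 ->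
    set_phase s s' T (PValidate rts U (rset T) held) ->
    objs_same s s' -> frame_time s s' -> step s (LInternal T) s'
| s_val_skip s s' T rts wts O todo held :
    phase_of s T = PValidate rts wts (O :: todo) held -> In O (wset T) ->
    set_phase s s' T (PValidate rts wts todo held) ->
    objs_same s s' -> frame_time s s' -> step s (LInternal T) s'
| s_val_ok s s' T rts wts O todo held :
    phase_of s T = PValidate rts wts (O :: todo) held -> ~ In O (wset T) ->
    locked s O = false -> (forall v, In v (versions s O) -> v <= rts) ->
    set_phase s s' T (PValidate rts wts todo held) ->
    objs_same s s' -> frame_time s s' -> step s (LInternal T) s'
| s_val_abort s s' T rts wts O todo held :
    phase_of s T = PValidate rts wts (O :: todo) held -> ~ In O (wset T) ->
    (locked s O = true \/ exists v, In v (versions s O) /\ rts < v) ->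
    release s s' held -> set_phase s s' T PAborted ->
    frame_time s s' -> step s (LInternal T) s'
| s_val_done s s' T rts wts held :
    phase_of s T = PValidate rts wts nil held ->
    set_phase s s' T (PInstall wts held) ->
    objs_same s s' -> frame_time s s' -> step s (LInternal T) s'
| s_install s s' T wts O todo :
    phase_of s T = PInstall wts (O :: todo) ->
    install_one s s' O wts ->
    set_phase s s' T (PInstall wts todo) ->
    frame_time s s' -> step s (LInstall T O wts) s'
| s_install_done s s' T wts :
    phase_of s T = PInstall wts nil ->
    set_phase s s' T PCommitted ->
    objs_same s s' -> frame_time s s' -> step s (LInternal T) s'.

Inductive exec : st -> list (label Obj Txn) -> st -> Prop :=
| exec_nil s : exec s nil s
| exec_cons s a s1 l s2 : step s a s1 -> exec s1 l s2 -> exec s (a :: l) s2.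

(* initial states: no transaction started, no object locked;
   initial versions, global time and local clocks arbitrary *)
Definition init (s : st) : Prop :=
  (forall T, phase_of s T = PStart) /\ (forall O, locked s O = false).

End Protocol.

Arguments init {Obj Txn Mach}.
Arguments step {Obj Txn Mach}.
Arguments exec {Obj Txn Mach}.

(* Main.v *)
Require Import Defs.
From Stdlib Require Import Reals List.
From Stdlib Require Import Lra Classical.
Open Scope R_scope.

Definition held_of {Obj : Type} (p : phase Obj) : list Obj :=
  match p with
  | PLock _ _ h => h
  | PWtsSleep _ h _ _ _ => h
  | PValidate _ _ _ h => h
  | PInstall _ t => t
  | _ => nil
  end.

Definition wts_ge {Obj : Type} (p : phase Obj) (r : R) : Prop :=
  match p with
  | PWtsSleep _ _ _ U _ => r <= U
  | PValidate _ w _ _ => r <= w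
  | PInstall w _ => r <= w
  | _ => True
  end.

Definition time_okp {Obj Txn Mach : Type} (eps : R) (mach : Txn -> Mach)
  (s : state Obj Txn Mach) (T : Txn) (p : phase Obj) : Prop :=
  match p with
  | PRtsSleep L U c0 => clk s (mach T) - c0 <= (1 + eps) * (gtime s - L)
  | PRead rts _ => rts <= gtime s
  | _ => True
  end.

Record Inv {Obj Txn Mach : Type} (eps : R) (mach : Txn -> Mach)
  (s : state Obj Txn Mach) (past : list (label Obj Txn)) : Prop := {
  i_time : forall T, time_okp eps mach s T (phase_of s T);
  i_lock : forall T O, In O (held_of (phase_of s T)) -> locked s O = true;
  i_nodup : forall T, NoDup (held_of (phase_of s T));
  i_disj : forall T1 T2 O, T1 <> T2 -> In O (held_of (phase_of s T1)) ->
           In O (held_of (phase_of s T2)) -> False;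
  i_inst : forall T O w, In (LInstall T O w) past -> In w (versions s O);
  i_reada : forall T O v r, In (LRead T O v r) past ->
            forall w, In w (versions s O) -> ~ (v < w < r);
  i_readc : forall T O v r, In (LRead T O v r) past -> r <= gtime s;
  i_readb : forall T O v r, In (LRead T O v r) past ->
            forall T', In O (held_of (phase_of s T')) -> wts_ge (phase_of s T') r
}.

Lemma Inv_incl {Obj Txn Mach : Type} eps mach (s : state Obj Txn Mach) p1 p2 :
  Inv eps mach s p1 -> incl p2 p1 -> Inv eps mach s p2.
Proof.
  intros [] Hi; constructor; eauto.
Qed.

Ltac phs Hoth T' T :=
  let e := fresh "e" in
  destruct (classic (T' = T)) as [e|e]; [subst T'|rewrite (Hoth _ e)].

Lemma phase_only {Obj Txn Mach : Type} eps mach (s s' : state Obj Txn Mach) past T p :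
  Inv eps mach s past -> objs_same _ _ _ s s' -> frame_time _ _ _ s s' ->
  set_phase _ _ _ s s' T p ->
  time_okp eps mach s T p ->
  (forall O, In O (held_of p) -> In O (held_of (phase_of s T))) ->
  NoDup (held_of p) ->
  (forall T0 O v r, In (LRead T0 O v r) past -> In O (held_of p) -> wts_ge p r) ->
  Inv eps mach s' (LInternal T :: past).
Proof.
  intros I [Hl Hv] [Hg Hc] [HpT Hoth] Ht Hsub Hnd Hw.
  constructor.
  - intro T'. unfold time_okp. rewrite Hg, Hc. phs Hoth T' T.
    + rewrite HpT. exact Ht.
    + apply (i_time _ _ _ _ I).
  - intros T' O. rewrite Hl. phs Hoth T' T.
    + rewrite HpT. intro H. eapply (i_lock _ _ _ _ I); eauto.
    + apply (i_lock _ _ _ _ I).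
  - intro T'. phs Hoth T' T. rewrite HpT; auto. apply (i_nodup _ _ _ _ I).
  - intros T1 T2 O ne H1 H2.
    destruct (classic (T1 = T)) as [e1|e1]; destruct (classic (T2 = T)) as [e2|e2];
      try congruence.
    + subst T1. rewrite HpT in H1. rewrite (Hoth _ e2) in H2.
      apply (i_disj _ _ _ _ I T T2 O); auto.
    + subst T2. rewrite HpT in H2. rewrite (Hoth _ e1) in H1.
      apply (i_disj _ _ _ _ I T1 T O); auto.
    + rewrite (Hoth _ e1) in H1. rewrite (Hoth _ e2) in H2.
      exact (i_disj _ _ _ _ I T1 T2 O ne H1 H2).
  - intros T0 O w [H|H]; [discriminate|]. rewrite Hv. eapply (i_inst _ _ _ _ I); eauto.
  - intros T0 O v r [H|H]; [discriminate|]. rewrite Hv. eapply (i_reada _ _ _ _ I); eauto.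
  - intros T0 O v r [H|H]; [discriminate|]. rewrite Hg. eapply (i_readc _ _ _ _ I); eauto.
  - intros T0 O v r [H|H] T'; [discriminate|]. phs Hoth T' T.
    + rewrite HpT. eauto.
    + eapply (i_readb _ _ _ _ I); eauto.
Qed.

Lemma add_read {Obj Txn Mach : Type} eps mach (s : state Obj Txn Mach) past T O v r :
  Inv eps mach s past ->
  (forall w, In w (versions s O) -> ~ (v < w < r)) -> r <= gtime s ->
  (forall T', In O (held_of (phase_of s T')) -> wts_ge (phase_of s T') r) ->
  Inv eps mach s (LRead T O v r :: past).
Proof.
  intros [] Ha Hc Hb; constructor; auto.
  - intros T0 O0 w [H|H]; [discriminate|eauto].
  - intros T0 O0 v0 r0 [H|H]; [injection H; intros; subst; auto|eauto].
  - intros T0 O0 v0 r0 [H|H]; [injection H; intros; subst; auto|eauto].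
  - intros T0 O0 v0 r0 [H|H]; [injection H; intros; subst; auto|eauto].
Qed.

Lemma abort_inv {Obj Txn Mach : Type} eps mach (s s' : state Obj Txn Mach) past T :
  Inv eps mach s past ->
  release _ _ _ s s' (held_of (phase_of s T)) ->
  set_phase _ _ _ s s' T PAborted -> frame_time _ _ _ s s' ->
  Inv eps mach s' (LInternal T :: past).
Proof.
  intros I [Hv Hrel] [HpT Hoth] [Hg Hc].
  constructor.
  - intro T'. unfold time_okp. rewrite Hg, Hc. phs Hoth T' T.
    + rewrite HpT. exact Logic.I.
    + apply (i_time _ _ _ _ I).
  - intros T' O. phs Hoth T' T.
    + rewrite HpT. intros [].
    + intro H. destruct (Hrel O) as [_ H2]. rewrite H2.
      * eapply (i_lock _ _ _ _ I); eauto.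
      * intro H3. exact (i_disj _ _ _ _ I T' T O e H H3).
  - intro T'. phs Hoth T' T. rewrite HpT; constructor. apply (i_nodup _ _ _ _ I).
  - intros T1 T2 O ne H1 H2.
    destruct (classic (T1 = T)) as [e1|e1]; destruct (classic (T2 = T)) as [e2|e2];
      try congruence.
    + subst T1. rewrite HpT in H1. destruct H1.
    + subst T2. rewrite HpT in H2. destruct H2.
    + rewrite (Hoth _ e1) in H1. rewrite (Hoth _ e2) in H2.
      exact (i_disj _ _ _ _ I T1 T2 O ne H1 H2).
  - intros T0 O w [H|H]; [discriminate|]. rewrite Hv. eapply (i_inst _ _ _ _ I); eauto.
  - intros T0 O v r [H|H]; [discriminate|]. rewrite Hv. eapply (i_reada _ _ _ _ I); eauto.
  - intros T0 O v r [H|H]; [discriminate|]. rewrite Hg. eapply (i_readc _ _ _ _ I); eauto.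
  - intros T0 O v r [H|H] T'; [discriminate|]. phs Hoth T' T.
    + rewrite HpT. intros [].
    + eapply (i_readb _ _ _ _ I); eauto.
Qed.

Lemma lock_inv {Obj Txn Mach : Type} eps mach (s s' : state Obj Txn Mach) past T rts O todo held :
  Inv eps mach s past ->
  phase_of s T = PLock rts (O :: todo) held ->
  locked s O = false ->
  lock_one _ _ _ s s' O ->
  set_phase _ _ _ s s' T (PLock rts todo (O :: held)) -> frame_time _ _ _ s s' ->
  Inv eps mach s' (LInternal T :: past).
Proof.
  intros I Hp Hun [Hv [HlO Hlo]] [HpT Hoth] [Hg Hc].
  assert (Hold : forall O', In O' held -> In O' (held_of (phase_of s T))).
  { rewrite Hp; auto. }
  constructor.
  - intro T'. unfold time_okp. rewrite Hg, Hc. phs Hoth T' T.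
    + rewrite HpT. exact Logic.I.
    + apply (i_time _ _ _ _ I).
  - intros T' O'. phs Hoth T' T.
    + rewrite HpT. simpl. intros [->|H]; auto.
      destruct (classic (O' = O)) as [->|ne]; auto.
      rewrite (Hlo _ ne). eapply (i_lock _ _ _ _ I); eauto.
    + intro H. destruct (classic (O' = O)) as [->|ne].
      * rewrite (i_lock _ _ _ _ I _ _ H) in Hun. discriminate.
      * rewrite (Hlo _ ne). eapply (i_lock _ _ _ _ I); eauto.
  - intro T'. phs Hoth T' T.
    + rewrite HpT. simpl. constructor.
      * intro H. rewrite (i_lock _ _ _ _ I T O (Hold _ H)) in Hun. discriminate.
      * pose proof (i_nodup _ _ _ _ I T) as N. rewrite Hp in N. exact N.
    + apply (i_nodup _ _ _ _ I).
  - assert (G : forall T2 O', T2 <> T -> In O' (O :: held) -> In O' (held_of (phase_of s T2)) -> False).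
    { intros T2 O' ne [<-|H] H2.
      - rewrite (i_lock _ _ _ _ I _ _ H2) in Hun. discriminate.
      - exact (i_disj _ _ _ _ I T T2 O' (fun e => ne (eq_sym e)) (Hold _ H) H2). }
    intros T1 T2 O' ne H1 H2.
    destruct (classic (T1 = T)) as [e1|e1]; destruct (classic (T2 = T)) as [e2|e2];
      try congruence.
    + subst T1. rewrite HpT in H1. rewrite (Hoth _ e2) in H2. eauto.
    + subst T2. rewrite HpT in H2. rewrite (Hoth _ e1) in H1. eauto.
    + rewrite (Hoth _ e1) in H1. rewrite (Hoth _ e2) in H2.
      exact (i_disj _ _ _ _ I T1 T2 O' ne H1 H2).
  - intros T0 O0 w [H|H]; [discriminate|]. rewrite Hv. eapply (i_inst _ _ _ _ I); eauto.
  - intros T0 O0 v r [H|H]; [discriminate|]. rewrite Hv. eapply (i_reada _ _ _ _ I); eauto.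
  - intros T0 O0 v r [H|H]; [discriminate|]. rewrite Hg. eapply (i_readc _ _ _ _ I); eauto.
  - intros T0 O0 v r [H|H] T'; [discriminate|]. phs Hoth T' T.
    + rewrite HpT. intros _. exact Logic.I.
    + eapply (i_readb _ _ _ _ I); eauto.
Qed.

Lemma install_inv {Obj Txn Mach : Type} eps mach (s s' : state Obj Txn Mach) past T wts O todo :
  Inv eps mach s past ->
  phase_of s T = PInstall wts (O :: todo) ->
  install_one _ _ _ s s' O wts ->
  set_phase _ _ _ s s' T (PInstall wts todo) -> frame_time _ _ _ s s' ->
  Inv eps mach s' (LInstall T O wts :: past).
Proof.
  intros I Hp [HvO [Hvo [HlO Hlo]]] [HpT Hoth] [Hg Hc].
  assert (Hold : forall O', In O' (O :: todo) -> In O' (held_of (phase_of s T))).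
  { rewrite Hp; auto. }
  assert (ND : NoDup (O :: todo)).
  { pose proof (i_nodup _ _ _ _ I T) as N. rewrite Hp in N. exact N. }
  assert (Hgrow : forall O' w, In w (versions s O') -> In w (versions s' O')).
  { intros O' w H. destruct (classic (O' = O)) as [->|ne].
    - rewrite HvO. right; exact H.
    - rewrite (Hvo _ ne). exact H. }
  constructor.
  - intro T'. unfold time_okp. rewrite Hg, Hc. phs Hoth T' T.
    + rewrite HpT. exact Logic.I.
    + apply (i_time _ _ _ _ I).
  - intros T' O'. phs Hoth T' T.
    + rewrite HpT. simpl. intro H.
      assert (ne : O' <> O) by (intros ->; inversion ND; auto).
      rewrite (Hlo _ ne). eapply (i_lock _ _ _ _ I); eauto. apply Hold; right; exact H.
    + intro H. assert (ne : O' <> O).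
      { intros ->. exact (i_disj _ _ _ _ I T T' O (fun e' => e (eq_sym e')) (Hold O (or_introl eq_refl)) H). }
      rewrite (Hlo _ ne). eapply (i_lock _ _ _ _ I); eauto.
  - intro T'. phs Hoth T' T.
    + rewrite HpT. simpl. inversion ND; auto.
    + apply (i_nodup _ _ _ _ I).
  - intros T1 T2 O' ne H1 H2.
    destruct (classic (T1 = T)) as [e1|e1]; destruct (classic (T2 = T)) as [e2|e2];
      try congruence.
    + subst T1. rewrite HpT in H1. rewrite (Hoth _ e2) in H2.
      exact (i_disj _ _ _ _ I T T2 O' ne (Hold _ (or_intror H1)) H2).
    + subst T2. rewrite HpT in H2. rewrite (Hoth _ e1) in H1.
      exact (i_disj _ _ _ _ I T1 T O' ne H1 (Hold _ (or_intror H2))).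
    + rewrite (Hoth _ e1) in H1. rewrite (Hoth _ e2) in H2.
      exact (i_disj _ _ _ _ I T1 T2 O' ne H1 H2).
  - intros T0 O0 w [H|H].
    + injection H; intros; subst. rewrite HvO. left; reflexivity.
    + apply Hgrow. eapply (i_inst _ _ _ _ I); eauto.
  - intros T0 O0 v r [H|H] w Hw; [discriminate|].
    destruct (classic (O0 = O)) as [->|ne].
    + rewrite HvO in Hw. destruct Hw as [<-|Hw].
      * pose proof (i_readb _ _ _ _ I _ _ _ _ H T) as B. rewrite Hp in B.
        simpl in B. specialize (B (or_introl eq_refl)). lra.
      * eapply (i_reada _ _ _ _ I); eauto.
    + rewrite (Hvo _ ne) in Hw. eapply (i_reada _ _ _ _ I); eauto.
  - intros T0 O0 v r [H|H]; [discriminate|]. rewrite Hg. eapply (i_readc _ _ _ _ I); eauto.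
  - intros T0 O0 v r [H|H] T'; [discriminate|]. phs Hoth T' T.
    + rewrite HpT. intros H1.
      pose proof (i_readb _ _ _ _ I _ _ _ _ H T) as B. rewrite Hp in B.
      exact (B (or_intror H1)).
    + eapply (i_readb _ _ _ _ I); eauto.
Qed.

Lemma time_inv {Obj Txn Mach : Type} eps mach (s s' : state Obj Txn Mach) past d :
  0 <= eps -> Inv eps mach s past -> 0 <= d -> gtime s' = gtime s + d ->
  (forall m, (1 - eps) * d <= clk s' m - clk s m <= (1 + eps) * d) ->
  objs_same _ _ _ s s' -> phase_of s' = phase_of s ->
  Inv eps mach s' (LTime :: past).
Proof.
  intros He I Hd Hg Hcl [Hl Hv] Hph.
  constructor.
  - intro T. rewrite Hph. pose proof (i_time _ _ _ _ I T) as O.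
    unfold time_okp in *. destruct (phase_of s T); auto.
    + specialize (Hcl (mach T)). rewrite Hg. nra.
    + rewrite Hg. lra.
  - intros T O. rewrite Hph, Hl. apply (i_lock _ _ _ _ I).
  - intro T. rewrite Hph. apply (i_nodup _ _ _ _ I).
  - intros T1 T2 O. rewrite Hph. apply (i_disj _ _ _ _ I).
  - intros T0 O w [H|H]; [discriminate|]. rewrite Hv. eapply (i_inst _ _ _ _ I); eauto.
  - intros T0 O v r [H|H]; [discriminate|]. rewrite Hv. eapply (i_reada _ _ _ _ I); eauto.
  - intros T0 O v r [H|H]; [discriminate|]. rewrite Hg.
    pose proof (i_readc _ _ _ _ I _ _ _ _ H). lra.
  - intros T0 O v r [H|H] T'; [discriminate|]. rewrite Hph. eapply (i_readb _ _ _ _ I); eauto.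
Qed.

Lemma step_inv {Obj Txn Mach : Type} eps mach rset wset (s s' : state Obj Txn Mach) a past :
  0 <= eps -> Inv eps mach s past -> step eps mach rset wset s a s' ->
  Inv eps mach s' (a :: past).
Proof.
  intros He I Hs.
  destruct Hs.
  - eapply time_inv; eauto.
  -
    eapply phase_only; eauto; simpl.
    + destruct H0. replace (clk s (mach T) - clk s (mach T)) with 0 by ring. apply Rmult_le_pos; lra.
    + intros _ [].
    + constructor.
    + auto.
  -
    pose proof (i_time _ _ _ _ I T) as Ht. rewrite H in Ht. simpl in Ht.
    unfold sleep_done in H0.
    eapply phase_only; eauto; simpl.
    + assert ((1 + eps) * (U - gtime s) <= 0) by nra.
      destruct (Rle_or_lt U (gtime s)); auto. nra.
    + intros _ [].
    + constructor.
    + auto.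
  -
    pose proof (i_time _ _ _ _ I T) as Ht. rewrite H in Ht. simpl in Ht.
    assert (I2 : Inv eps mach s' (LInternal T :: past)).
    { eapply phase_only; eauto; simpl.
      - intros _ [].
      - constructor.
      - auto. }
    destruct H5 as [Hl Hv]. destruct H6 as [Hg Hc]. destruct H4 as [HpT Hoth].
    apply (Inv_incl _ _ _ (LRead T O v rts :: LInternal T :: past)).
    + apply add_read; auto.
      * rewrite Hv. intros w Hw [A B]. specialize (H3 w Hw). lra.
      * rewrite Hg. exact Ht.
      * intro T'. phs Hoth T' T.
        -- rewrite HpT. intros [].
        -- intro Hin. rewrite (i_lock _ _ _ _ I _ _ Hin) in H0. discriminate.
    + intros x [<-|Hx]; [left; auto | right; right; auto].
  - eapply phase_only; eauto; simpl; auto. intros _ []. constructor.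
  - eapply phase_only; eauto; simpl; auto. intros _ []. constructor.
  - eapply phase_only; eauto; simpl; auto. intros _ []. constructor.
  - eapply lock_inv; eauto.
  - eapply abort_inv; eauto. rewrite H. exact H1.
  -
    eapply phase_only; eauto; simpl; rewrite ?H; simpl; auto.
    + pose proof (i_nodup _ _ _ _ I T) as N. rewrite H in N. exact N.
    + intros T0 O v r Hr _. pose proof (i_readc _ _ _ _ I _ _ _ _ Hr). lra.
  -
    eapply phase_only; eauto; simpl; rewrite ?H; simpl; auto.
    + pose proof (i_nodup _ _ _ _ I T) as N. rewrite H in N. exact N.
    + intros T0 O v r Hr Hin. pose proof (i_readb _ _ _ _ I _ _ _ _ Hr T) as B.
      rewrite H in B. exact (B Hin).
  - eapply phase_only; eauto; simpl; rewrite ?H; simpl; auto.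
    + pose proof (i_nodup _ _ _ _ I T) as N. rewrite H in N. exact N.
    + intros T0 O0 v r Hr Hin. pose proof (i_readb _ _ _ _ I _ _ _ _ Hr T) as B.
      rewrite H in B. exact (B Hin).
  - eapply phase_only; eauto; simpl; rewrite ?H; simpl; auto.
    + pose proof (i_nodup _ _ _ _ I T) as N. rewrite H in N. exact N.
    + intros T0 O0 v r Hr Hin. pose proof (i_readb _ _ _ _ I _ _ _ _ Hr T) as B.
      rewrite H in B. exact (B Hin).
  - eapply abort_inv; eauto. rewrite H. exact H2.
  - eapply phase_only; eauto; simpl; rewrite ?H; simpl; auto.
    + pose proof (i_nodup _ _ _ _ I T) as N. rewrite H in N. exact N.
    + intros T0 O0 v r Hr Hin. pose proof (i_readb _ _ _ _ I _ _ _ _ Hr T) as B.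
      rewrite H in B. exact (B Hin).
  - eapply install_inv; eauto.
  - eapply phase_only; eauto; simpl; auto. intros _ []. constructor.
Qed.

Lemma exec_inv {Obj Txn Mach : Type} eps mach rset wset (s1 s2 : state Obj Txn Mach) l :
  0 <= eps -> exec eps mach rset wset s1 l s2 ->
  forall past, Inv eps mach s1 past -> Inv eps mach s2 (l ++ past).
Proof.
  intros He Hx. induction Hx; intros past I; simpl; auto.
  apply (Inv_incl _ _ _ (l ++ a :: past)).
  - apply IHHx. eapply step_inv; eauto.
  - intros x [<-|Hx2]; apply in_or_app; [right; left; auto|].
    apply in_app_or in Hx2. destruct Hx2; auto. right; right; auto.
Qed.

Theorem lemma2 (Obj Txn Mach : Type) (eps : R) (mach : Txn -> Mach)
    (rset wset : Txn -> list Obj)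
    (s0 s : state Obj Txn Mach) (labs : list (label Obj Txn))
    (T : Txn) (Rob : Obj) (vR rts : R) :
  0 <= eps ->
  init s0 ->
  exec eps mach rset wset s0 labs s ->
  In (LRead T Rob vR rts) labs ->
  forall (T' : Txn) (w : R), In (LInstall T' Rob w) labs -> ~ (vR < w < rts).
Proof.
  intros He [Hph Hl] Hx Hr T' w Hi.
  assert (I0 : Inv eps mach s0 nil).
  { constructor; intros; rewrite ?Hph in *; simpl in *; try tauto; try constructor. }
  pose proof (exec_inv _ _ _ _ _ _ _ He Hx nil I0) as I.
  rewrite app_nil_r in I.
  eapply (i_reada _ _ _ _ I); eauto. eapply (i_inst _ _ _ _ I); eauto.
Qed.
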